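(* Consider the Random Majority Model (RMM) on the cycle $C_n$ started from an initial coloring with $b_0=pn$ blue nodes, for some $0\le p\le 1$. Then $\mathbb{E}[b_t]=pn$ for every $t\in\mathbb{N}$, where $b_t$ is the number of blue nodes after round $t$.
   Context: A coloring is a map from the nodes to $\{b,w\}$. In RMM, all nodes update simultaneously in each round: a node adopts the color strictly more frequent among its neighbors in the previous round, and in case of a tie chooses blue or white independently and uniformly at random. *)

(* Defs.v *)
From mathcomp Require Import all_boot all_order all_algebra.
Set Implicit Arguments. Unset Strict Implicit. Unset Printing Implicit Defensive.
Import Order.TTheory GRing.Theory Num.Theory.
Local Open Scope ring_scope.

(* A coloring of C_n: nodes are 'I_n, neighbours of v are ordS v and
   ord_pred v (cyclic successor/predecessor); color true = blue, false = white. *)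
Definition coloring (n : nat) := {ffun 'I_n -> bool}.

(* Probability that node v gets color b in the next round, given coloring c.
   v has two neighbours; if they agree, v adopts their (strictly more frequent)
   color; otherwise it is a tie and v chooses uniformly at random. *)
Definition rmm_node_prob (R : fieldType) (n : nat) (c : coloring n)
    (v : 'I_n) (b : bool) : R :=
  let l := c (ord_pred v) in
  let r := c (ordS v) in
  if l == r then (if b == l then 1 else 0) else 2^-1.

Definition rmm_trans (R : fieldType) (n : nat) (c c' : coloring n) : R :=
  \prod_(v : 'I_n) rmm_node_prob R c v (c' v).

Fixpoint rmm_dist (R : fieldType) (n : nat) (c0 : coloring n) (t : nat)
    : coloring n -> R :=
  match t with
  | 0 => fun c => if c == c0 then 1 else 0
  | t'.+1 => fun c' => \sum_(c : coloring n) rmm_dist R c0 t' c * rmm_trans R c c'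
  end.

Definition nblue (n : nat) (c : coloring n) : nat := #|[set v | c v]|.

Definition rmm_expected_blue (R : fieldType) (n : nat) (c0 : coloring n) (t : nat) : R :=
  \sum_(c : coloring n) rmm_dist R c0 t c * (nblue c)%:R.

(* Main.v *)
Require Import Defs.
From mathcomp Require Import all_boot all_order all_algebra.
From mathcomp Require Import ring.
Import Order.TTheory GRing.Theory Num.Theory.
Local Open Scope ring_scope.

Section Aux.
Variable (R : realFieldType) (n : nat).

Lemma node_sum (c : coloring n) v :
  rmm_node_prob R c v true + rmm_node_prob R c v false = 1.
Proof.
rewrite /rmm_node_prob; case: (c (ord_pred v)); case: (c (ordS v)) => //=.
- by rewrite addr0.
- by rewrite -div1r -mulrDl -(natrD R 1 1) divff // pnatr_eq0.
- by rewrite -div1r -mulrDl -(natrD R 1 1) divff // pnatr_eq0.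
- by rewrite add0r.
Qed.

Lemma nblueE (c : coloring n) :
  (nblue c)%:R = \sum_v ((c v : nat)%:R : R).
Proof.
rewrite /nblue -sum1_card natr_sum big_mkcond /=.
by apply: eq_bigr => v _; rewrite inE; case: (c v).
Qed.

Lemma trans_one (c : coloring n) w :
  \sum_(c' : coloring n) rmm_trans R c c' * ((c' w : nat)%:R)
  = rmm_node_prob R c w true.
Proof.
pose G v (b : bool) := rmm_node_prob R c v b * (if v == w then (b : nat)%:R else 1).
have -> : \sum_(c' : coloring n) rmm_trans R c c' * ((c' w : nat)%:R)
          = \sum_(c' : coloring n) \prod_v G v (c' v).
  apply: eq_bigr => c' _; rewrite /rmm_trans /G big_split /=.
  congr (_ * _); rewrite (bigD1 w) //= eqxx.
  rewrite big1 ?mulr1 // => v.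
  by case: eqP.
rewrite -bigA_distr_bigA /= (bigD1 w) //= [X in _ * X]big1 => [|v vw].
  by rewrite mulr1 /G big_bool /= eqxx mulr1 mulr0 addr0.
by rewrite /G big_bool /= (negbTE vw) !mulr1 node_sum.
Qed.

Lemma prob_true (c : coloring n) w :
  rmm_node_prob R c w true
  = ((c (ord_pred w) : nat)%:R + (c (ordS w) : nat)%:R) / 2.
Proof.
rewrite /rmm_node_prob; case: (c (ord_pred w)); case: (c (ordS w)) => //=.
- by rewrite -(natrD R 1 1) divff // pnatr_eq0.
- by rewrite addr0 div1r.
- by rewrite add0r div1r.
- by rewrite addr0 mul0r.
Qed.

Lemma trans_blue (c : coloring n) :
  \sum_(c' : coloring n) rmm_trans R c c' * (nblue c')%:R = (nblue c)%:R.
Proof.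
under eq_bigr => c' _ do rewrite nblueE mulr_sumr.
rewrite exchange_big /=.
under eq_bigr => w _ do rewrite trans_one prob_true.
rewrite -mulr_suml big_split /=.
have e1 : \sum_v ((c (ord_pred v) : nat)%:R : R) = \sum_v ((c v : nat)%:R)
  by rewrite [RHS](reindex_inj (@ord_pred_inj n)).
have e2 : \sum_v ((c (ordS v) : nat)%:R : R) = \sum_v ((c v : nat)%:R)
  by rewrite [RHS](reindex_inj (@ordS_inj n)).
rewrite e1 e2.
rewrite -nblueE -mulr2n; by field.
Qed.

End Aux.

Theorem theorem4p2 (R : realFieldType) (n : nat) (hn : (3 <= n)%N)
    (p : R) (hp0 : 0 <= p) (hp1 : p <= 1) (c0 : coloring n)
    (hb0 : (nblue c0)%:R = p * n%:R) :
  forall t : nat, rmm_expected_blue R c0 t = p * n%:R.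
Proof.
elim => [|t IH].
  rewrite /rmm_expected_blue /= (bigD1 c0) //= eqxx mul1r big1 ?addr0 //.
  by move=> c; case: eqP => // _ _; rewrite mul0r.
rewrite -IH /rmm_expected_blue /=.
under eq_bigr => c' _ do rewrite mulr_suml.
rewrite exchange_big /=; apply: eq_bigr => c _.
by rewrite -trans_blue mulr_sumr; apply: eq_bigr => c' _; rewrite mulrA.
Qed.
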